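(* Let $X,E,F,G$ be locally convex spaces over $\mathbb{K}$ such that $X$ is a $k^\infty$-space. Let $U\subseteq X$ be open, $n\in\mathbb{N}_0\cup\{\infty\}$, and let $\mathcal{S}=b$ or $\mathcal{S}=c$. If $f\colon U\to L(E,F)_{\mathcal{S}}$ and $g\colon U\to L(F,G)_{\mathcal{S}}$ are $C^n_{\mathbb{K}}$-maps, then the map $U\to L(E,G)_{\mathcal{S}}$, $z\mapsto g(z)\circ f(z)$, is $C^n_{\mathbb{K}}$.
   Context: $L(E,F)_b$ (resp. $L(E,F)_c$) is the space of continuous linear maps $E\to F$ with the topology of uniform convergence on bounded (resp. compact) subsets of $E$. $C^n_{\mathbb{K}}$-maps in Keller's sense: $f$ is $C^0$ if continuous; $C^1$ if continuous, all directional derivatives $df(x,y)=\lim_{t\to0}(f(x+ty)-f(x))/t$ exist and $df\colon U\times X\to F$ is continuous; $C^{n+1}$ if $C^1$ and $df$ is $C^n$; $C^\infty$ if $C^n$ for all $n$. A Hausdorff space $X$ is a $k$-space if a set is closed whenever its intersection with each compact set is closed in that compact set; $X$ is a $k^\infty$-space if it is Hausdorff and all finite powers $X^n$ are $k$-spaces (e.g. $X=\mathbb{K}=\mathbb{C}$, or any metrizable space). *)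

(* Defs.v *)
From HB Require Import structures.
From mathcomp Require Import all_boot all_order all_algebra.
From mathcomp Require Import all_classical all_reals all_analysis.
From mathcomp Require Import complex.
Set Implicit Arguments.
Unset Strict Implicit.
Unset Printing Implicit Defensive.
Import Order.TTheory GRing.Theory Num.Theory.
Import numFieldTopology.Exports numFieldNormedType.Exports.
Local Open Scope classical_set_scope.
Local Open Scope ring_scope.

Section Defs.
Variable K : numFieldType.

Definition k_space (T : topologicalType) : Prop :=
  hausdorff_space T /\
  forall A : set T,
    (forall C : set T, compact C -> exists D : set T, closed D /\ A `&` C = D `&` C) ->
    closed A.

Definition k_infty_space (T : topologicalType) : Prop :=
  hausdorff_space T /\ forall n : nat, k_space {ptws 'I_n -> T}.

Definition vN_bounded (E : tvsType K) (B : set E) : Prop :=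
  forall W : set E, nbhs (0 : E) W ->
    exists r : K, 0 < r /\
      forall s : K, r <= `|s| -> B `<=` [set s *: w | w in W].

(** The two families of subsets defining L(E,F)_b and L(E,F)_c. *)
Inductive Sfam := S_b | S_c.

Definition Sfam_sets (S : Sfam) (E : tvsType K) : set (set E) :=
  match S with
  | S_b => [set B | vN_bounded B]
  | S_c => [set B | compact B]
  end.

Definition cont_lin (E F : tvsType K) (phi : E -> F) : Prop :=
  (forall (a : K) (u v : E), phi (a *: u + v) = a *: phi u + phi v) /\
  continuous phi.

(** Convergence in L(E,F)_S (topology of uniform convergence on the sets of
    the family S): [phi z] tends to [L] along the filter [Fl]. The basic
    0-neighbourhoods of L(E,F)_S are {psi | psi(B) ⊆ W}, B in S, W a
    0-neighbourhood of F. *)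
Definition S_lim (S : Sfam) (E F : tvsType K) (T : Type) (Fl : set_system T)
    (phi : T -> E -> F) (L : E -> F) : Prop :=
  forall B : set E, Sfam_sets S B ->
  forall W : set F, nbhs (0 : F) W ->
    Fl [set z | forall e, B e -> W (phi z e - L e)].

(** C^0 map U -> L(E,F)_S: values in L(E,F) on U and continuous at each point
    of U (U is open, so this is continuity on U). *)
Definition C0_LS (S : Sfam) (E F : tvsType K) (X : tvsType K) (U : set X)
    (f : X -> E -> F) : Prop :=
  (forall x, U x -> cont_lin (f x)) /\
  (forall x, U x -> S_lim S (nbhs x) f (f x)).

Fixpoint Cn_LS (S : Sfam) (E F : tvsType K) (n : nat) :
    forall X : tvsType K, set X -> (X -> E -> F) -> Prop :=
  fun X U f =>
    C0_LS S U f /\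
    match n with
    | 0 => True
    | m.+1 => exists df : (X * X)%type -> E -> F,
        (forall x y, U x ->
           S_lim S (dnbhs (0 : K))
             (fun t : K => fun e => t^-1 *: (f (x + t *: y) e - f x e))
             (df (x, y))) /\
        @Cn_LS S E F m (X * X)%type (U `*` setT) df
    end.

Inductive natinf := Fin of nat | Inf.

Definition Ck_LS (S : Sfam) (E F : tvsType K) (n : natinf) (X : tvsType K)
    (U : set X) (f : X -> E -> F) : Prop :=
  match n with
  | Fin k => @Cn_LS S E F k X U f
  | Inf => forall k, @Cn_LS S E F k X U f
  end.

End Defs.

(* Main.v *)
Require Import Defs.
From HB Require Import structures.
From mathcomp Require Import all_boot all_order all_algebra.
From mathcomp Require Import all_classical all_reals all_analysis.
From mathcomp Require Import complex.
From mathcomp Require Import lra.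
Import Order.TTheory GRing.Theory Num.Theory.
Import numFieldTopology.Exports numFieldNormedType.Exports.
Local Open Scope classical_set_scope.
Local Open Scope ring_scope.
Set Implicit Arguments.
Unset Strict Implicit.
Unset Printing Implicit Defensive.

Lemma decomp2 (M : zmodType) (a b y : M) : a - y = (a - b) + (b - y).
Proof. by rewrite addrA subrK. Qed.
Lemma decomp (M : zmodType) (a b y : M) : a = y + ((a - b) + (b - y)).
Proof. by rewrite -decomp2 addrC subrK. Qed.

Section Basic.
Variable K : numFieldType.

Lemma cl_add (E F : tvsType K) (T : E -> F) : cont_lin T ->
  forall u v, T (u + v) = T u + T v.
Proof.
case=> lT _ u v; have := lT 1 u v; by rewrite !scale1r.
Qed.

Lemma cl0 (E F : tvsType K) (T : E -> F) : cont_lin T -> T 0 = 0.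
Proof.
move=> hT; have := cl_add hT 0 0; rewrite addr0.
by move=> /(congr1 (fun x => x - T 0)); rewrite subrr addrK.
Qed.

Lemma clZ (E F : tvsType K) (T : E -> F) : cont_lin T ->
  forall a u, T (a *: u) = a *: T u.
Proof.
move=> hT a u; have := hT.1 a u 0.
by rewrite !addr0 => ->; rewrite (cl0 hT) addr0.
Qed.

Lemma clB (E F : tvsType K) (T : E -> F) : cont_lin T ->
  forall u v, T (u - v) = T u - T v.
Proof.
move=> hT u v; rewrite -scaleN1r (cl_add hT) (clZ hT) scaleN1r //.
Qed.

Lemma cl_nbhs0 (E F : tvsType K) (T : E -> F) (W : set F) : cont_lin T ->
  nbhs 0 W -> nbhs 0 (T @^-1` W).
Proof.
move=> hT W0; have := hT.2 0 W; rewrite /= (cl0 hT); exact.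
Qed.

Lemma nbhs_split (E : tvsType K) (W : set E) : nbhs 0 W ->
  exists2 W', nbhs 0 W' & forall a b, W' a -> W' b -> W (a + b).
Proof.
move=> W0.
have := @add_continuous E (0, 0); rewrite /continuous_at /= addr0 => /(_ W W0).
case=> [[A B] /= [nA nB] sAB]; exists (A `&` B); first exact: filterI.
by move=> a b [Aa _] [_ Bb]; apply: (sAB (a, b)).
Qed.

Lemma nbhs_shift (E : tvsType K) (y : E) (P : set E) :
  nbhs y P -> nbhs 0 [set w | P (y + w)].
Proof.
move=> /(@nbhsB _ _ _ y (- y)); rewrite addNr; apply: filterS.
by move=> w [p Pp <-]; rewrite /= addrA subrr add0r.
Qed.

Lemma nbhs_unshift (E : tvsType K) (y : E) (P : set E) :
  nbhs 0 [set w | P (y + w)] -> nbhs y P.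
Proof.
move=> /(@nbhsT _ _ _ y); apply: filterS.
by move=> w [p Pp <-].
Qed.
End Basic.

Section SLim.
Variables (K : numFieldType) (S : Sfam).

Lemma S_lim_ext (E F : tvsType K) (T : Type) (Fl : set_system T) (phi psi : T -> E -> F) L :
  (forall t e, phi t e = psi t e) -> S_lim S Fl phi L -> S_lim S Fl psi L.
Proof.
move=> h H B SB W W0; have := H B SB W W0.
by congr Fl; apply/funext => t; apply/propext; split => + e Be => /(_ e Be); rewrite h.
Qed.

Lemma S_lim_comp (E F : tvsType K) (T1 T2 : Type) (Fl1 : set_system T1)
  (Fl2 : set_system T2) (g : T2 -> T1) (phi : T1 -> E -> F) L :
  (forall P, Fl1 P -> Fl2 (g @^-1` P)) ->
  S_lim S Fl1 phi L -> S_lim S Fl2 (fun t => phi (g t)) L.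
Proof. by move=> hg H B SB W W0; exact: hg (H B SB W W0). Qed.

Lemma S_lim_add (E F : tvsType K) (T : Type) (Fl : set_system T) (a b : T -> E -> F) A B' :
  Filter Fl -> S_lim S Fl a A -> S_lim S Fl b B' ->
  S_lim S Fl (fun t e => a t e + b t e) (fun e => A e + B' e).
Proof.
move=> FF Ha Hb B SB W W0; have [W' W'0 hW'] := nbhs_split W0.
apply: filterS (filterI (Ha B SB W' W'0) (Hb B SB W' W'0)).
move=> t [h1 h2] e Be; rewrite opprD addrACA; exact: hW' (h1 e Be) (h2 e Be).
Qed.

Lemma S_lim_lin (E F G : tvsType K) (T : Type) (Fl : set_system T) (Tl : F -> G)
  (b : T -> E -> F) B' :
  Filter Fl -> cont_lin Tl -> S_lim S Fl b B' ->
  S_lim S Fl (fun t e => Tl (b t e)) (fun e => Tl (B' e)).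
Proof.
move=> FF hT Hb B SB W W0.
apply: filterS (Hb B SB _ (cl_nbhs0 hT W0)) => t h e Be.
by rewrite -(clB hT); exact: h.
Qed.

Lemma S_lim_prod (E F G : tvsType K) (T : Type) (Fl : set_system T)
  (a : T -> F -> G) (b : T -> E -> F) A B' :
  Filter Fl -> S_lim S Fl a A -> S_lim S Fl b B' -> cont_lin A ->
  (forall B, Sfam_sets S B -> exists2 M, Sfam_sets S M &
      Fl [set t | forall e, B e -> M (b t e)]) ->
  S_lim S Fl (fun t e => a t (b t e)) (fun e => A (B' e)).
Proof.
move=> FF Ha Hb hA Hbd B SB W W0; have [W' W'0 hW'] := nbhs_split W0.
have [M SM FM] := Hbd B SB.
apply: filterS (filterI FM (filterI (Ha M SM W' W'0)
   (Hb B SB _ (cl_nbhs0 hA W'0)))).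
move=> t [h1 [h2 h3]] e Be.
have -> : a t (b t e) - A (B' e) = (a t (b t e) - A (b t e)) + A (b t e - B' e).
  by rewrite (clB hA) addrA subrK.
exact: hW' (h2 _ (h1 e Be)) (h3 e Be).
Qed.
End SLim.

Lemma num1 (K : numFieldType) (c r : K) : 0 < r -> c != 0 -> `|c| < r^-1 -> r <= `|c^-1|.
Proof.
move=> r0 c0 hc; rewrite normfV; apply: ltW.
by rewrite -[X in X < _](invrK r) ltf_pV2 ?posrE ?invr_gt0 ?normr_gt0.
Qed.

Lemma num2 (K : numFieldType) (s eps : K) : 0 < eps -> 2 * eps^-1 <= `|s| ->
  s != 0 /\ `|s^-1| < eps.
Proof.
move=> e0 hs; have h1 : eps^-1 < `|s|.
  apply: lt_le_trans hs; by rewrite ltr_pMl ?invr_gt0 // ltr1n.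
have s0 : 0 < `|s| by apply: lt_trans h1; rewrite invr_gt0.
split; first by rewrite -normr_gt0.
by rewrite normfV -[X in _ < X](invrK eps) ltf_pV2 ?posrE ?invr_gt0.
Qed.

Lemma bound_b (K : numFieldType) (V E F : tvsType K) (U : set V) (f : V -> E -> F) :
  C0_LS S_b U f -> forall C, compact C -> C `<=` U ->
  forall B, Sfam_sets S_b B ->
  vN_bounded [set f p.1 p.2 | p in C `*` B].
Proof.
move=> [hl hc] C cC CU B SB W W0.
have [W1 W10 hW1] := nbhs_split W0.
have H : \forall c \near (0:K), forall z, C z -> forall e, B e -> W (c *: f z e).
  move/compact_near_coveringP : cC => /(_ K (nbhs (0:K))
     (fun c z => forall e, B e -> W (c *: f z e)) _) H; apply: H => z1 Cz1.
  have := @scale_continuous K F (0, 0); rewrite /continuous_at /= scaler0.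
  move=> /(_ W1 W10) [[A1 A2] /= [nA1 nA2] sA].
  have [r [r0 hr]] := SB (f z1 @^-1` W1) (cl_nbhs0 (hl z1 (CU z1 Cz1)) W10).
  have Hz := hc z1 (CU z1 Cz1) B SB A2 nA2.
  have nb : nbhs (0:K) (A1 `&` [set c | `|c| < r^-1]).
    apply: filterI => //; apply/nbhs_ballP; exists r^-1; first by rewrite /= invr_gt0.
    by move=> c; rewrite -ball_normE /= sub0r normrN.
  exists ([set z | forall e, B e -> A2 (f z e - f z1 e)], A1 `&` [set c : K | `|c| < r^-1]); first by split; [exact: Hz | exact: nb].
  move=> [z c] /= [hz [hc1 hc2]] e Be.
  have -> : c *: f z e = c *: f z1 e + c *: (f z e - f z1 e).
    by rewrite scalerBr addrC subrK.
  apply: hW1; last by apply: (sA (c, f z e - f z1 e)); split => /=; [exact: hc1|exact: hz].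
  have [->|c0] := eqVneq c 0; first by rewrite scale0r; exact: nbhs_singleton.
  have [w /= Ww <-] := hr c^-1 (num1 r0 c0 hc2) e Be.
  by rewrite (clZ (hl z1 (CU z1 Cz1))) scalerA divff // scale1r.
have /nbhs_ballP [eps /= eps0 heps] := H.
exists (2 * eps^-1); split; first by rewrite mulr_gt0 // invr_gt0.
move=> s hs _ [[z e] [Cz Be] <-] /=.
have [s0 hs'] := num2 eps0 hs.
exists (s^-1 *: f z e); last by rewrite scalerA divff // scale1r.
apply: (heps s^-1) => //; by rewrite -ball_normE /= sub0r normrN.
Qed.

Lemma bound_c (K : numFieldType) (V E F : tvsType K) (U : set V) (f : V -> E -> F) :
  C0_LS S_c U f -> forall C, compact C -> C `<=` U ->
  forall B, Sfam_sets S_c B ->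
  compact [set f p.1 p.2 | p in C `*` B].
Proof.
move=> [hl hc] C cC CU B SB.
apply: (@continuous_compact _ _ (fun p : V * E => f p.1 p.2)); last exact: compact_setX.
apply/subspace_continuousP => [[z1 e1]] [/= Cz1 Be1] P /= PN.
have /nbhs_split [W1 W10 hW1] := nbhs_shift PN.
have Hz := hc z1 (CU z1 Cz1) B SB W1 W10.
have He : nbhs e1 [set e | W1 (f z1 e - f z1 e1)].
  apply: ((hl z1 (CU z1 Cz1)).2 e1 [set v | W1 (v - f z1 e1)]).
  apply: nbhs_unshift; apply: filterS W10 => w /=; by rewrite addrC addKr.
exists ([set z | forall e, B e -> W1 (f z e - f z1 e)], [set e | W1 (f z1 e - f z1 e1)]).
  by split.
move=> [z e] /= [hz he] [_ Be] /=.
change (P (f z e)); move: hW1; rewrite /from_subspace /= => hW1.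
have -> : f z e = f z1 e1 + ((f z e - f z1 e) + (f z1 e - f z1 e1)).
  exact: decomp.
by apply: hW1; [exact: hz | exact: he].
Qed.

Lemma bound (K : numFieldType) (S : Sfam) (V E F : tvsType K) (U : set V) (f : V -> E -> F) :
  C0_LS S U f -> forall C, compact C -> C `<=` U ->
  forall B, Sfam_sets S B -> exists2 M, Sfam_sets S M &
    forall z e, C z -> B e -> M (f z e).
Proof.
move=> hf C cC CU B SB; exists [set f p.1 p.2 | p in C `*` B].
  by case: S hf SB => hf SB /=; [exact: bound_b hf C cC CU B SB | exact: bound_c hf C cC CU B SB].
by move=> z e Cz Be; exists (z, e).
Qed.

Definition kc (V : topologicalType) := forall A : set V,
  (forall C : set V, compact C -> exists D : set V, closed D /\ A `&` C = D `&` C) ->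
  closed A.

Lemma KL (K : numFieldType) (S : Sfam) (V E G : tvsType K) (U : set V)
  (h : V -> E -> G) : kc V -> open U ->
  (forall C, compact C -> forall p, C p -> U p -> forall B, Sfam_sets S B ->
    forall W, nbhs 0 W ->
    \forall z \near p, C z -> forall e, B e -> W (h z e - h p e)) ->
  forall z0, U z0 -> S_lim S (nbhs z0) h (h z0).
Proof.
move=> kV oU Hc z0 Uz0 B SB W W0.
pose O0 := fun psi : E -> G => forall e, B e -> W (psi e - h z0 e).
pose O := fun psi : E -> G => exists B', Sfam_sets S B' /\ exists W', nbhs 0 W' /\
  forall phi, (forall e, B' e -> W' (phi e - psi e)) -> O0 phi.
pose A := [set z | ~ (U z /\ O (h z))].
have cA : closed A.
  apply: kV => C cC; exists (closure (A `&` C)); split; first exact: closed_closure.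
  apply/seteqP; split.
    by move=> z [Az Cz]; split => //; exact: subset_closure.
  move=> p [clp Cp]; split => //.
  move=> [Up [B' [SB' [W' [W'0 hW']]]]].
  have [W'' W''0 hW''] := nbhs_split W'0.
  have N := Hc C cC p Cp Up B' SB' W'' W''0.
  have NU : nbhs p U by move: oU; rewrite openE => /(_ p Up).
  have [z [[Az Cz] [hz Uz]]] := clp _ (filterI N NU).
  apply: Az; split => //; exists B'; split => //; exists W''; split => // phi hphi.
  apply: hW' => e Be; rewrite (decomp2 _ (h z e)).
  by apply: hW''; [exact: hphi | exact: hz Cz e Be].
have nA : nbhs z0 (~` A).
  have := closed_openC cA; rewrite openE; apply => /=.
  move=> hA; apply: hA; split => //; exists B; split => //; exists W; split => //.
apply: filterS nA => z /contrapT [Uz [B' [SB' [W' [W'0 hW']]]]].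
by apply: hW' => e Be; rewrite subrr; exact: nbhs_singleton.
Qed.

Lemma CCprod (K : numFieldType) (S : Sfam) (V E F G : tvsType K) (U : set V)
  (f : V -> E -> F) (g : V -> F -> G) : open U -> C0_LS S U f -> C0_LS S U g ->
  forall C, compact C -> forall p, C p -> U p -> forall B, Sfam_sets S B ->
    forall W, nbhs 0 W ->
    \forall z \near p, C z -> forall e, B e -> W (g z (f z e) - g p (f p e)).
Proof.
move=> oU hf hg C cC p Cp Up B SB W W0.
have NU : nbhs p U by move: oU; rewrite openE => /(_ p Up).
have [N Np clN] := @uniform_regular V p U NU.
have cK : compact (C `&` closure N) by exact: compact_closedI cC (@closed_closure _ N).
have [M SM hM] := bound hf cK (fun z Kz => clN z Kz.2) SB.
have [W' W'0 hW'] := nbhs_split W0.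
have Hg := hg.2 p Up M SM W' W'0.
have Hf := hf.2 p Up B SB _ (cl_nbhs0 (hg.1 p Up) W'0).
apply: filterS (filterI Np (filterI Hg Hf)) => z [Nz [hz1 hz2]] Cz e Be.
have Kz : (C `&` closure N) z by split => //; exact: subset_closure.
rewrite (decomp2 _ (g p (f z e))) -(clB (hg.1 p Up)).
by apply: hW'; [exact: hz1 _ (hM z e Kz Be) | exact: hz2 e Be].
Qed.

Lemma cont_scalel (K : numFieldType) (V : tvsType K) (y : V) :
  continuous (fun t : K => t *: y).
Proof.
move=> t; apply: (@continuous_comp K (K^o * V)%type V (fun t => (t, y))
  (fun z => z.1 *: z.2)); last exact: scale_continuous.
rewrite /continuous_at /=.
have h1 : (fun t0 : K => (t0 : K^o)) @ nbhs t --> (t : K^o) by exact: cvg_id.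
have h2 : (fun _ : K => y) @ nbhs t --> y by exact: cvg_cst.
exact: (cvg_pair h1 h2).
Qed.

Lemma cont_addl (K : numFieldType) (V : tvsType K) (x : V) :
  continuous (fun w : V => x + w).
Proof.
move=> w; apply: (@continuous_comp V (V * V)%type V (fun w => (x, w))
  (fun z => z.1 + z.2)); last exact: add_continuous.
by apply: cvg_pair; [exact: cvg_cst | exact: cvg_id].
Qed.

Lemma cont_line (K : numFieldType) (V : tvsType K) (x y : V) :
  continuous (fun t : K => x + t *: y).
Proof.
move=> t; apply: (@continuous_comp K V V (fun t => t *: y) (fun w => x + w)).
  exact: cont_scalel.
exact: cont_addl.
Qed.

Lemma nbhs_dnbhs (T : topologicalType) (x : T) (P : set T) : nbhs x P -> dnbhs x P.
Proof. by move=> h; rewrite /dnbhs /within; apply: filterS h => t Pt _. Qed.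

Lemma Dprod (K : numFieldType) (S : Sfam) (V E F G : tvsType K) (U : set V)
  (f : V -> E -> F) (g : V -> F -> G) (df : V * V -> E -> F) (dg : V * V -> F -> G) :
  (exists D : set K, compact D /\ nbhs 0 D) ->
  open U -> C0_LS S U f -> C0_LS S U g ->
  (forall x y, U x -> S_lim S (dnbhs (0 : K))
     (fun t : K => fun e => t^-1 *: (f (x + t *: y) e - f x e)) (df (x, y))) ->
  (forall x y, U x -> S_lim S (dnbhs (0 : K))
     (fun t : K => fun e => t^-1 *: (g (x + t *: y) e - g x e)) (dg (x, y))) ->
  (forall x y, U x -> cont_lin (dg (x, y))) ->
  forall x y, U x -> S_lim S (dnbhs (0 : K))
     (fun t : K => fun e => t^-1 *: (g (x + t *: y) (f (x + t *: y) e) - g x (f x e)))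
     (fun e => dg (x, y) (f x e) + g x (df (x, y) e)).
Proof.
move=> [D [cD D0]] oU hf hg Hdf Hdg hdg x y Ux.
have NU : nbhs x U by move: oU; rewrite openE => /(_ x Ux).
have gc := @cont_line K V x y.
have g0 : x + 0 *: y = x by rewrite scale0r addr0.
have gc0 : forall P, nbhs x P -> nbhs (0 : K) [set t | P (x + t *: y)].
  by move=> P; have h := gc 0; rewrite /continuous_at g0 in h; exact: h P.
have nU := gc0 U NU.
have [N N0 clN] := @uniform_regular K 0 _ nU.
have cD' : compact (D `&` closure N) by exact: compact_closedI cD (@closed_closure _ N).
have cK : compact ((fun t => x + t *: y) @` (D `&` closure N)).
  by apply: continuous_compact => //; exact: continuous_subspaceT.
have KU : (fun t => x + t *: y) @` (D `&` closure N) `<=` U.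
  by move=> z [t [_ /clN Ut] <-].
have ev : dnbhs (0 : K) (D `&` closure N).
  apply: nbhs_dnbhs; apply: filterS (filterI D0 N0) => t [Dt Nt]; split => //.
  exact: subset_closure.
have Hf : S_lim S (dnbhs (0:K)) (fun t => f (x + t *: y)) (f x).
  apply: (S_lim_comp _ (hf.2 x Ux)) => P /gc0; exact: nbhs_dnbhs.
have Hbd : forall B, Sfam_sets S B -> exists2 M, Sfam_sets S M &
    dnbhs (0:K) [set t | forall e, B e -> M (f (x + t *: y) e)].
  move=> B SB; have [M SM hM] := bound hf cK KU SB; exists M => //.
  by apply: filterS ev => t Dt e Be; apply: hM => //; exists t.
have FF : Filter (dnbhs (0 : K)) by exact: _.
have H1 := S_lim_prod FF (Hdg x y Ux) Hf (hdg x y Ux) Hbd.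
have H2 := S_lim_lin FF (hg.1 x Ux) (Hdf x y Ux).
have H3 := S_lim_add FF H1 H2.
apply: S_lim_ext H3 => t e /=.
by rewrite (clZ (hg.1 x Ux)) (clB (hg.1 x Ux)) -scalerDr -decomp2.
Qed.

Lemma open_setXT (T1 T2 : topologicalType) (U : set T1) :
  open U -> open (U `*` [set: T2]).
Proof.
move=> oU; rewrite openE => -[a b] [Ua _].
have NU : nbhs a U by move: oU; rewrite openE => /(_ a Ua).
by exists (U, setT) => //; split => //; exact: filterT.
Qed.

Lemma cont_add (K : numFieldType) (T : topologicalType) (V : tvsType K)
  (p q : T -> V) : continuous p -> continuous q -> continuous (fun t => p t + q t).
Proof.
move=> cp cq t; apply: (@continuous_comp T (V * V)%type V (fun t => (p t, q t))
  (fun z => z.1 + z.2)); last exact: add_continuous.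
by apply: cvg_pair; [exact: cp | exact: cq].
Qed.

Section Cn.
Variables (K : numFieldType) (S : Sfam).

Lemma C0_add (V E F : tvsType K) (U : set V) (f1 f2 : V -> E -> F) :
  C0_LS S U f1 -> C0_LS S U f2 -> C0_LS S U (fun z e => f1 z e + f2 z e).
Proof.
move=> [l1 c1] [l2 c2]; split.
  move=> z Uz; split.
    by move=> a u v; rewrite (l1 z Uz).1 (l2 z Uz).1 scalerDr addrACA.
  by apply: cont_add; [exact: (l1 z Uz).2 | exact: (l2 z Uz).2].
move=> z Uz; exact: S_lim_add (c1 z Uz) (c2 z Uz).
Qed.

Lemma Cn_C0 m (V E F : tvsType K) (U : set V) (f : V -> E -> F) :
  Cn_LS S m U f -> C0_LS S U f.
Proof. by case: m => [|m] []. Qed.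

Lemma Cn_mono m : forall (V E F : tvsType K) (U : set V) (f : V -> E -> F),
  Cn_LS S m.+1 U f -> Cn_LS S m U f.
Proof.
elim: m => [|m IH] V E F U f [h [df [hd hC]]]; first by split.
by split => //; exists df; split => //; exact: IH.
Qed.

Lemma Cn_add m : forall (V E F : tvsType K) (U : set V) (f1 f2 : V -> E -> F),
  Cn_LS S m U f1 -> Cn_LS S m U f2 -> Cn_LS S m U (fun z e => f1 z e + f2 z e).
Proof.
elim: m => [|m IH] V E F U f1 f2.
  by move=> [h1 _] [h2 _]; split => //; exact: C0_add.
move=> [h1 [d1 [hd1 hC1]]] [h2 [d2 [hd2 hC2]]]; split; first exact: C0_add.
exists (fun p e => d1 p e + d2 p e); split; last exact: IH.
move=> x y Ux; apply: S_lim_ext (S_lim_add _ (hd1 x y Ux) (hd2 x y Ux)) => t e.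
by rewrite -scalerDr opprD addrACA.
Qed.

Lemma cl_pair (V W : tvsType K) (l : W -> V) : cont_lin l ->
  cont_lin (fun p : W * W => (l p.1, l p.2)).
Proof.
move=> hl; split.
  move=> a [u1 u2] [v1 v2] /=; by rewrite !hl.1.
move=> p; apply: cvg_pair.
  apply: (@continuous_comp (W * W)%type W V fst l); first exact: cvg_fst.
  exact: hl.2.
apply: (@continuous_comp (W * W)%type W V snd l); first exact: cvg_snd.
exact: hl.2.
Qed.

Lemma Cn_precomp m : forall (V W E F : tvsType K) (l : W -> V) (U : set V)
  (U' : set W) (f : V -> E -> F), cont_lin l -> (forall w, U' w -> U (l w)) ->
  Cn_LS S m U f -> Cn_LS S m U' (fun w => f (l w)).
Proof.
have C0p : forall (V W E F : tvsType K) (l : W -> V) (U : set V)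
  (U' : set W) (f : V -> E -> F), cont_lin l -> (forall w, U' w -> U (l w)) ->
  C0_LS S U f -> C0_LS S U' (fun w => f (l w)).
  move=> V W E F l U U' f hl hU [hf1 hf2]; split; first by move=> w /hU; exact: hf1.
  move=> w /hU Uw; apply: S_lim_comp (hf2 _ Uw) => P; exact: (hl.2 w P).
elim: m => [|m IH] V W E F l U U' f hl hU.
  by move=> [h _]; split => //; exact: C0p h.
move=> [h [df [hd hC]]]; split; first exact: C0p h.
exists (fun p => df (l p.1, l p.2)); split.
  move=> w w' Uw; apply: S_lim_ext (hd (l w) (l w') (hU w Uw)) => t e.
  by rewrite [w + _]addrC hl.1 [_ + l w]addrC.
apply: (IH _ _ _ _ (fun p : W * W => (l p.1, l p.2)) (U `*` setT)) => //.
  exact: cl_pair.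
by move=> [w w'] [/= Uw _]; split => //=; exact: hU.
Qed.
End Cn.

Lemma cl_fst (K : numFieldType) (V : tvsType K) : cont_lin (@fst V V).
Proof. by split => // p; exact: cvg_fst. Qed.

Section Prod.
Variables (K : numFieldType) (S : Sfam) (P : tvsType K -> Prop).
Hypothesis HPk : forall V, P V -> kc V.
Hypothesis HP2 : forall V, P V -> P (V * V)%type.
Hypothesis Kc : exists D : set K, compact D /\ nbhs 0 D.

Lemma C0prod (V E F G : tvsType K) (U : set V) (f : V -> E -> F) (g : V -> F -> G) :
  kc V -> open U -> C0_LS S U f -> C0_LS S U g ->
  C0_LS S U (fun z e => g z (f z e)).
Proof.
move=> kV oU hf hg; split.
  move=> z Uz; split.
    by move=> a u v /=; rewrite (hf.1 z Uz).1 (hg.1 z Uz).1.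
  move=> e; apply: continuous_comp; [exact: (hf.1 z Uz).2 | exact: (hg.1 z Uz).2].
exact: KL kV oU (CCprod oU hf hg).
Qed.

Lemma Cn_prod m : forall (V E F G : tvsType K) (U : set V) (f : V -> E -> F)
  (g : V -> F -> G), P V -> open U ->
  Cn_LS S m U f -> Cn_LS S m U g -> Cn_LS S m U (fun z e => g z (f z e)).
Proof.
elim: m => [|m IH] V E F G U f g PV oU.
  by move=> [hf _] [hg _]; split => //; exact: C0prod (HPk PV) oU hf hg.
move=> Hf Hg; have [hf [df [hdf cdf]]] := Hf; have [hg [dg [hdg cdg]]] := Hg.
split; first exact: C0prod (HPk PV) oU hf hg.
exists (fun p e => dg p (f p.1 e) + g p.1 (df p e)); split.
  move=> x y Ux; apply: (Dprod Kc oU hf hg hdf hdg) => // x' y' Ux'.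
  by apply: (Cn_C0 cdg).1; split.
have oU2 : open (U `*` [set: V]) by exact: open_setXT.
apply: Cn_add.
  apply: (IH _ _ _ _ _ (fun p : V * V => f p.1) dg (HP2 PV) oU2) => //.
  apply: (Cn_precomp (U := U)) (Cn_mono Hf) => //; first exact: cl_fst.
  by move=> w [].
apply: (IH _ _ _ _ _ df (fun p : V * V => g p.1) (HP2 PV) oU2) => //.
apply: (Cn_precomp (U := U)) (Cn_mono Hg) => //; first exact: cl_fst.
by move=> w [].
Qed.
End Prod.

Lemma ptws_cont (I : Type) (T X : topologicalType) (h : T -> {ptws I -> X}) :
  (forall i, continuous (fun t => h t i)) -> continuous h.
Proof.
move=> hc t; apply/cvg_sup => i.
move=> U [? /= [[W oW <-]]] /= Wsfz /filterS; apply; apply: (hc i t).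
exact: open_nbhs_nbhs.
Qed.

Lemma ptws_proj (I : eqType) (X : topologicalType) (i : I) :
  continuous (fun c : {ptws I -> X} => c i).
Proof. exact: (@proj_continuous I (fun _ => X) i). Qed.

Definition homeo (T1 T2 : topologicalType) (p : T1 -> T2) (q : T2 -> T1) :=
  [/\ continuous p, continuous q, cancel p q & cancel q p].

Lemma kc_homeo (T1 T2 : topologicalType) (p : T1 -> T2) (q : T2 -> T1) :
  homeo p q -> kc T2 -> kc T1.
Proof.
move=> [cp cq pK qK] k2 A hA.
have cA2 : closed (q @^-1` A).
  apply: k2 => C2 cC2.
  have cC1 : compact (q @` C2) by exact: continuous_compact (continuous_subspaceT cq) cC2.
  have [D1 [cD1 eq1]] := hA _ cC1; exists (q @^-1` D1); split.
    by move/continuous_closedP : cq; apply.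
  apply/seteqP; split => z [h Cz]; split => //.
    have : (A `&` q @` C2) (q z) by split => //; exists z.
    by rewrite eq1; case.
  have : (D1 `&` q @` C2) (q z) by split => //; exists z.
  by rewrite -eq1; case.
have -> : A = p @^-1` (q @^-1` A).
  by apply/seteqP; split => x /=; rewrite pK.
by move/continuous_closedP : cp; apply.
Qed.

Section Good.
Variables (K : numFieldType) (X : tvsType K).
Hypothesis hX : k_infty_space X.

Definition Pg (V : tvsType K) := exists n (p : V -> {ptws 'I_n -> X})
  (q : {ptws 'I_n -> X} -> V), homeo p q.

Lemma Pg_kc V : Pg V -> kc V.
Proof. by move=> [n [p [q h]]]; apply: kc_homeo h (hX.2 n).2. Qed.

Lemma Pg_X : Pg X.
Proof.
exists 1%N, (fun x => fun _ => x), (fun c => c ord0); split.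
- by apply: (@ptws_cont _ X X) => i x; exact: cvg_id.
- exact: ptws_proj.
- by [].
- by move=> c; apply: funext => i; rewrite (ord1 i).
Qed.

Lemma Pg_2 V : Pg V -> Pg (V * V)%type.
Proof.
move=> [n [p [q [cp cq pK qK]]]].
exists (n + n)%N, (fun v : V * V => fun i : 'I_(n + n) =>
  match fintype.split i with inl j => p v.1 j | inr j => p v.2 j end),
  (fun c => (q (fun j => c (lshift n j)), q (fun j => c (rshift n j)))); split.
- apply: (@ptws_cont _ _ X) => i; case: (fintype.split i) => j.
    move=> v; apply: (@continuous_comp _ _ _ (fun v : V * V => p v.1) (fun c => c j)).
      apply: (@continuous_comp _ _ _ fst p); [exact: cvg_fst | exact: cp].
    exact: ptws_proj.
  move=> v; apply: (@continuous_comp _ _ _ (fun v : V * V => p v.2) (fun c => c j)).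
    apply: (@continuous_comp _ _ _ snd p); [exact: cvg_snd | exact: cp].
  exact: ptws_proj.
- have c1 : continuous (fun c : {ptws 'I_(n + n) -> X} => q (fun j => c (lshift n j))).
    move=> c; apply: (@continuous_comp _ _ _ (fun c : {ptws 'I_(n + n) -> X} =>
      (fun j => c (lshift n j)) : {ptws 'I_n -> X}) q); last exact: cq.
    by apply: (@ptws_cont _ _ X) => j; exact: ptws_proj.
  have c2 : continuous (fun c : {ptws 'I_(n + n) -> X} => q (fun j => c (rshift n j))).
    move=> c; apply: (@continuous_comp _ _ _ (fun c : {ptws 'I_(n + n) -> X} =>
      (fun j => c (rshift n j)) : {ptws 'I_n -> X}) q); last exact: cq.
    by apply: (@ptws_cont _ _ X) => j; exact: ptws_proj.
  move=> c; exact: (cvg_pair (c1 c) (c2 c)).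
- move=> [a b] /=; congr pair.
    rewrite -[RHS]pK; congr q; apply: funext => j.
    by rewrite (unsplitK (inl j : 'I_n + 'I_n)).
  rewrite -[RHS]pK; congr q; apply: funext => j.
  by rewrite (unsplitK (inr j : 'I_n + 'I_n)).
- move=> c; apply: funext => i /=; rewrite -[in RHS](splitK i).
  by case: (fintype.split i) => j /=; rewrite qK.
Qed.
End Good.

Section KcSec.
Local Open Scope complex_scope.
Lemma KcR (R : realType) : exists D : set (R : numFieldType), compact D /\ nbhs (0 : R : numFieldType) D.
Proof.
exists `[-1, 1]%classic; split; first exact: segment_compact.
apply/nbhs_ballP; exists 1 => //= z; rewrite -ball_normE /= sub0r normrN.
by rewrite ltr_norml => /andP [h1 h2]; rewrite /= in_itv /= !ltW.
Qed.


Lemma KcC (R : realType) : exists D : set (R[i] : numFieldType), compact D /\ nbhs (0 : (R[i] : numFieldType)) D.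
Proof.
pose phi := fun p : R * R => (p.1 +i* p.2 : R[i]).
exists (phi @` (`[-1, 1]%classic `*` `[-1, 1]%classic)); split.
  apply: continuous_compact; last by apply: compact_setX; exact: segment_compact.
  apply: continuous_subspaceT => -[a0 b0].
  apply/cvgrPdist_lt => eps eps0.
  have : (0 : R[i]) < eps by [].
  rewrite ltcE => /andP [/eqP hIm e0].
  set e := complex.Re eps in e0.
  have eE : eps = e%:C by rewrite /e; move: hIm; case: (eps) => a b /= ->.
  rewrite eE.
  have e20 : 0 < e / 2 by rewrite divr_gt0.
  exists ([set a | `|a0 - a| < e / 2], [set b | `|b0 - b| < e / 2]).
    by split; apply/nbhs_ballP; exists (e / 2) => // x; rewrite -ball_normE.
  move=> [a b] /= [ha hb].
  rewrite normc_def /= ltcR.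
  rewrite -[X in _ < X](ger0_norm (ltW e0)) -sqrtr_sqr ltr_sqrt ?exprn_gt0 //.
  move: ha hb; rewrite !ltr_norml => /andP [h1 h2] /andP [h3 h4].
  nra.
apply/nbhs_ballP; exists 1 => //= -[a b]; rewrite -ball_normE /= sub0r normrN.
rewrite normc_def /= ltcR => h0.
have h : a ^+ 2 + b ^+ 2 < 1 by rewrite -ltr_sqrt // sqrtr1.
exists (a, b) => //; split => /=; rewrite in_itv /=; apply/andP; split; nra.
Qed.

End KcSec.

Lemma Kcpt (R : realType) (K : numFieldType)
  (hK : K = R :> numFieldType \/ K = R[i] :> numFieldType) :
  exists D : set K, compact D /\ nbhs 0 D.
Proof. by case: hK => ->; [exact: KcR | exact: KcC]. Qed.

Theorem proposition3p1 (R : realType) (K : numFieldType)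
  (hK : K = R :> numFieldType \/ K = R[i] :> numFieldType)
  (X E F G : tvsType K)
  (hX : k_infty_space X) (hE : hausdorff_space E) (hF : hausdorff_space F)
  (hG : hausdorff_space G)
  (U : set X) (hU : open U) (n : natinf) (S : Sfam)
  (f : X -> E -> F) (g : X -> F -> G) :
  Ck_LS S n U f -> Ck_LS S n U g ->
  Ck_LS S n U (fun z => fun e => g z (f z e)).
Proof.
have Kc := Kcpt hK.
have PX := @Pg_X K X.
case: n => [k|] Hf Hg /=.
  exact: (Cn_prod (@Pg_kc K X hX) (@Pg_2 K X) Kc PX hU Hf Hg).
by move=> k; exact: (Cn_prod (@Pg_kc K X hX) (@Pg_2 K X) Kc PX hU (Hf k) (Hg k)).
Qed.
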